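(* Let $N\ge2$ and let $a_1,\dots,a_m$ be transpositions in $S_N$ each of the form $(\alpha,N)$ with $1\le\alpha\le N-1$. Let $\pi$ be the partition of $\{1,\dots,m\}$ in which $j,k$ are in the same block iff $a_j=a_k$, and let $\sigma=a_1\cdots a_m$. Then $2|\pi|\ge|\sigma|+m$ if and only if $\pi\in NC_{1,2}(m)$.
   Context: $|\pi|$ is the number of blocks of $\pi$. For a permutation $\sigma$, $|\sigma|$ is the minimal number of transpositions whose product is $\sigma$. A partition of $\{1,\dots,m\}$ is non-crossing if there are no $k_1<l_1<k_2<l_2$ with $k_1,k_2$ in one block and $l_1,l_2$ in a different block. $NC_{1,2}(m)$ is the set of non-crossing partitions of $\{1,\dots,m\}$ all of whose blocks have one or two elements. *)

(* Defs.v *)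
From mathcomp Require Import all_boot all_fingroup.
Set Implicit Arguments. Unset Strict Implicit. Unset Printing Implicit Defensive.

Local Open Scope group_scope.

Definition transp_word (T : finType) (s : {perm T}) (k : nat) : bool :=
  [exists ts : k.-tuple (T * T),
     all dpair ts && (s == \prod_(t <- ts) tperm t.1 t.2)].

Lemma transp_word_ex (T : finType) (s : {perm T}) : exists k, transp_word s k.
Proof.
case: (prod_tpermP s) => ts Hs Hd; exists (size ts).
apply/existsP; exists (in_tuple ts); by rewrite /= Hd Hs eqxx.
Qed.

Definition perm_len (T : finType) (s : {perm T}) : nat :=
  ex_minn (transp_word_ex s).

(* Non-crossing partitions with blocks of size 1 or 2 of 'I_m
   (the index set {1..m} shifted to {0..m-1}, order preserved). *)
Definition noncrossing (m : nat) (P : {set {set 'I_m}}) : Prop :=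
  forall (B B' : {set 'I_m}), B \in P -> B' \in P -> B != B' ->
  forall k1 l1 k2 l2 : 'I_m, (k1 < l1)%N -> (l1 < k2)%N -> (k2 < l2)%N ->
  ~ [/\ k1 \in B, k2 \in B, l1 \in B' & l2 \in B'].

Definition NC12 (m : nat) (P : {set {set 'I_m}}) : Prop :=
  partition P [set: 'I_m] /\
  (forall B, B \in P -> (#|B| = 1)%N \/ (#|B| = 2)%N) /\
  noncrossing P.

Definition kernel_partition (m : nat) (U : eqType) (a : 'I_m -> U)
  : {set {set 'I_m}} :=
  [set [set k | a k == a j] | j : 'I_m].

(* Main.v *)
Require Import Defs.
From mathcomp Require Import all_boot all_fingroup.
From mathcomp Require Import zify.
Set Implicit Arguments. Unset Strict Implicit. Unset Printing Implicit Defensive.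

Local Open Scope group_scope.

Section PL.
Variable T : finType.
Implicit Types (s : {perm T}) (x y : T).

Lemma porbits_mulr s x y :
  #|porbits (s * tperm x y)| + (x \notin porbit s y).*2 = #|porbits s| + (x != y).
Proof.
have := porbits_mul_tperm s^-1 x y.
rewrite porbitV -(porbitsV s) -(porbitsV (s * tperm x y)) invMg tpermV => <-.
by [].
Qed.

Lemma porbits1 : #|porbits (1 : {perm T})| = #|T|.
Proof.
rewrite /porbits card_imset // => x y; move/eqP; rewrite eq_porbit_mem.
by rewrite porbit.unlock cycle1 imset_set1 /aperm perm1 inE=> /eqP.
Qed.

Lemma porbits_le s : (#|porbits s| <= #|T|)%N.
Proof. exact: leq_imset_card. Qed.

Lemma porbits_step s x y : x != y -> (#|porbits s| <= (#|porbits (tperm x y * s)|).+1)%N.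
Proof.
move=> xy; have := porbits_mul_tperm s x y; rewrite xy.
case: (_ \notin _) => /= H; lia.
Qed.

Lemma lower_bound (ts : seq (T * T)) : all dpair ts ->
  (#|T| <= #|porbits (\prod_(t <- ts) tperm t.1 t.2)| + size ts)%N.
Proof.
elim: ts => [|t ts IH] /=; first by rewrite big_nil porbits1 addn0.
case/andP => dt /IH {}IH; rewrite big_cons.
apply: leq_trans IH _; rewrite addnS -addSn leq_add2r.
exact: porbits_step.
Qed.

Lemma upper_bound n s : (#|T| - #|porbits s| = n)%N ->
  exists ts : seq (T * T), [/\ size ts = n, all dpair ts &
     s = \prod_(t <- ts) tperm t.1 t.2].
Proof.
elim: n s => [|n IH] s Hn.
  exists [::]; split => //; rewrite big_nil.
  case: (pickP (fun x => s x != x)) => [x sx | s_id]; last first.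
    by apply/permP=> x; apply/eqP/idPn; rewrite perm1 s_id.
  exfalso.
  have y := x.
  have := porbits_mulr s (s x) x.
  have -> : (s x \notin porbit s x) = false.
    by rewrite (mem_porbit s 1) //.
  rewrite sx /= addn0 => H.
  have := porbits_le (s * tperm (s x) x); simpl in H; rewrite H addn1 => H1.
  move/eqP: Hn; rewrite subn_eq0 => Hn; have := leq_trans H1 Hn; by rewrite ltnn.
case: (pickP (fun x => s x != x)) => [x sx | s_id]; last first.
  move: Hn; have -> : s = 1 by apply/permP=> x; apply/eqP/idPn; rewrite perm1 s_id.
  by rewrite porbits1 subnn.
set y := s^-1 x.
have yx : y != x by apply: contra sx; rewrite /y => /eqP {1}<-; rewrite permKV.
have := porbits_mul_tperm s x y.
have -> : (x \notin porbit s y) = false.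
  by rewrite -{1}(permKV s x) -/y (mem_porbit s 1).
have xy : (x != y) = true by rewrite eq_sym.
rewrite xy /= addn0 addn1 => H.
have H2 := porbits_le (tperm x y * s).
have : (#|T| - #|porbits (tperm x y * s)|)%N = n.
  rewrite H; move: H2; rewrite H => H2; rewrite subnS Hn //.
case/IH => ts [Hs Hd Hp].
exists ((x, y) :: ts); split => /=; first by rewrite Hs.
  by rewrite Hd eq_sym yx.
by rewrite big_cons /= -Hp mulgA tperm2 mul1g.
Qed.

Lemma perm_lenE s : perm_len s = (#|T| - #|porbits s|)%N.
Proof.
rewrite /perm_len; case: ex_minnP => k /existsP [ts /andP [Hd /eqP Hs]] Hmin.
apply/eqP; rewrite eqn_leq; apply/andP; split.
  have [ts' [H1 H2 H3]] := upper_bound (erefl (#|T| - #|porbits s|)%N).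
  apply: Hmin; apply/existsP.
  have Ht : size ts' == (#|T| - #|porbits s|)%N by rewrite H1.
  exists (Tuple Ht); by rewrite /= H2 H3 eqxx.
have := lower_bound Hd; rewrite -Hs size_tuple; lia.
Qed.
End PL.

Local Close Scope group_scope.


Section Comb.
Variable T : eqType.
Variable c : T.
Implicit Types (w : seq T) (x y : T).

Definition nocross w := forall i j k l, i < j -> j < k -> k < l -> l < size w ->
  nth c w i = nth c w k -> nth c w j = nth c w l -> nth c w i = nth c w j.
Definition NC w := (forall y, count_mem y w <= 2) /\ nocross w.
Definition cov w k := [exists i : 'I_(size w), exists j : 'I_(size w),
   (i < k < j) && (nth c w i == nth c w j)].
Definition outer w y := (count_mem y w == 1) && ~~ cov w (index y w).
Definition Sx w := filter (outer w) w.

Lemma covP w k : reflect (exists i j, [/\ i < k, k < j, j < size w & nth c w i = nth c w j])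
  (cov w k).
Proof.
apply: (iffP existsP) => [[i /existsP [j /andP [/andP [h1 h2] /eqP h3]]]|[i [j [h1 h2 h3 h4]]]].
  by exists i, j; split.
have hi : i < size w by lia.
exists (Ordinal hi); apply/existsP; exists (Ordinal h3); rewrite /= h1 h2 h4 eqxx.
done.
Qed.

Lemma uniq_pos w x i : count_mem x w = 1 -> i < size w -> nth c w i = x -> i = index x w.
Proof.
move=> Hc Hi Hn.
have xw : x \in w by rewrite -Hn mem_nth.
have Hp := index_size x w.
have hxp := nth_index c xw.
move: Hp hxp; set p := index x w => Hp hxp.
case: (ltngtP i p) => // H.
  by have := before_find c H; rewrite /= Hn eqxx.
move: Hc; rewrite -(cat_take_drop p.+1 w) count_cat.
have : x \in take p.+1 w by rewrite in_take // ltnSn.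
rewrite -has_pred1 has_count => h1.
have : x \in drop p.+1 w.
  rewrite -Hn.
  have -> : nth c w i = nth c (drop p.+1 w) (i - p.+1).
    by rewrite nth_drop; have -> : (p.+1 + (i - p.+1) = i)%N by lia.
  apply: mem_nth; rewrite size_drop; lia.
rewrite -has_pred1 has_count; lia.
Qed.

Lemma nth_rcons_lt w x i : i < size w -> nth c (rcons w x) i = nth c w i.
Proof. by move=> h; rewrite nth_rcons h. Qed.

Lemma nth_rcons_n w x : nth c (rcons w x) (size w) = x.
Proof. by rewrite nth_rcons ltnn eqxx. Qed.

Lemma count_rcons_mem w x y : count_mem y (rcons w x) = count_mem y w + (x == y).
Proof. by rewrite -cats1 count_cat /= addn0. Qed.

Lemma C1 w x : NC (rcons w x) <-> NC w /\ (x \in w -> outer w x).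
Proof.
rewrite /NC /nocross size_rcons; split.
  case=> Hc Hn; split; first split.
  - move=> y; have := Hc y; rewrite count_rcons_mem; lia.
  - move=> i j k l h1 h2 h3 h4.
    have H := Hn i j k l h1 h2 h3 (ltn_trans h4 (ltnSn _)).
    rewrite !nth_rcons_lt in H; [exact H|lia..].
  move=> xw; rewrite /outer; apply/andP; split.
    have := Hc x; rewrite count_rcons_mem eqxx.
    have : 0 < count_mem x w by rewrite -has_count has_pred1.
    move=> *; apply/eqP; lia.
  apply/covP => [[i [j [h1 h2 h3 h4]]]].
  have hx := nth_index c xw.
  have := Hn i (index x w) j (size w) h1 h2 h3 (ltnSn _).
  rewrite nth_rcons_n !nth_rcons_lt //; try lia.
  move=> /(_ h4 hx) h5.
  by have := before_find c h1; rewrite /= h5 hx eqxx.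
case=> [[Hc Hn] Ho]; split.
  move=> y; rewrite count_rcons_mem; case: eqP => [<-|]; last by rewrite addn0.
  case xw: (x \in w).
    by move: (Ho xw) => /andP [/eqP -> _].
  by move: xw => /negbT; rewrite -has_pred1 has_count; lia.
move=> i j k l h1 h2 h3 h4.
case: (ltngtP l (size w)) => hl; [|lia|].
  have Hl : forall q, q <= l -> q < size w by lia.
  rewrite !nth_rcons_lt; try (apply: Hl; lia); by apply: Hn.
rewrite hl nth_rcons_n !nth_rcons_lt; try lia.
move=> hik hj.
have xw : x \in w by rewrite -hj mem_nth //; lia.
move: (Ho xw) => /andP [/eqP hc hcov].
have hjp := uniq_pos hc (ltac:(lia) : j < size w) hj.
exfalso; move/negP: hcov; apply; apply/covP; exists i, k; split; try lia.
  exact hik.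
Qed.

Lemma index_rcons_in w x y : y \in w -> index y (rcons w x) = index y w.
Proof. by move=> yw; rewrite -cats1 index_cat yw. Qed.

Lemma cov_rcons_notin w x k : x \notin w -> k < size w -> cov (rcons w x) k = cov w k.
Proof.
move=> xw hk; apply/covP/covP => [[i [j [h1 h2 h3 h4]]]|[i [j [h1 h2 h3 h4]]]].
  rewrite size_rcons in h3.
  case: (ltngtP j (size w)) => hj; [|lia|].
    exists i, j; split => //; by rewrite -!(@nth_rcons_lt w x) //; lia.
  move: h4; rewrite hj nth_rcons_n nth_rcons_lt; last lia.
  move=> h; move/negP: xw; case; rewrite -h mem_nth //; lia.
exists i, j; split => //; first by rewrite size_rcons; lia.
by rewrite !nth_rcons_lt //; lia.
Qed.

Lemma C2 w x : x \notin w -> Sx (rcons w x) = rcons (Sx w) x.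
Proof.
move=> xw; rewrite /Sx filter_rcons.
have -> : outer (rcons w x) x.
  rewrite /outer count_rcons_mem eqxx.
  move: (xw); rewrite -has_pred1 has_count -leqNgt leqn0 => /eqP -> /=.
  apply/negP => /covP [i [j [h1 h2 h3 _]]].
  move: h2 h3; rewrite -cats1 index_cat (negbTE xw) /= eqxx size_cat /=; lia.
congr rcons; apply: eq_in_filter => y yw.
have yx : (x == y) = false by apply/negP => /eqP e; move: xw; rewrite e yw.
rewrite /outer count_rcons_mem yx addn0 index_rcons_in //.
by rewrite cov_rcons_notin // index_mem.
Qed.

Lemma filter_take_lem (P : pred T) w x : x \in w -> P x ->
  (forall y, P y -> count_mem y w = 1) ->
  filter (fun y => P y && (y \in take (index x w) w)) w =
  take (index x (filter P w)) (filter P w).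
Proof.
move=> xw Px HP.
set p := index x w.
have hp : p < size w by rewrite index_mem.
have xn : nth c w p = x by rewrite nth_index.
have dn := drop_nth c hp.
move: dn; set t := take p w; set d := drop p w => dn.
have E : w = t ++ d by rewrite cat_take_drop.
rewrite {1}E [in filter P w]E !filter_cat.
have -> : [seq y <- d | P y && (y \in t)] = [::].
  apply/eqP; rewrite -size_eq0 size_filter -leqn0 leqNgt -has_count; apply/negP.
  case/hasP => y yd /andP [Py yt].
  have := HP y Py; rewrite E count_cat.
  move: yd yt; rewrite -!has_pred1 !has_count; lia.
rewrite cats0.
have -> : [seq y <- t | P y && (y \in t)] = [seq y <- t | P y].
  by apply: eq_in_filter => y ->; rewrite andbT.
rewrite dn xn /= Px index_cat.
have -> : (x \in [seq y <- t | P y]) = false.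
  by rewrite mem_filter /t in_take // ltnn andbF.
by rewrite /= eqxx addn0 take_size_cat.
Qed.

Lemma C3 w x : x \in w -> outer w x ->
  Sx (rcons w x) = take (index x (Sx w)) (Sx w).
Proof.
move=> xw /[dup] Ox /andP [/eqP hc hcov].
rewrite /Sx -(@filter_take_lem (outer w) w x) //; last first.
  by move=> y /andP [/eqP].
rewrite filter_rcons.
have -> : outer (rcons w x) x = false.
  by rewrite /outer count_rcons_mem hc eqxx.
apply: eq_in_filter => y yw.
have hy := index_mem y w; rewrite yw in hy.
rewrite in_take //.
case: (eqVneq y x) => [->|yx].
  by rewrite /outer count_rcons_mem hc eqxx ltnn andbF.
have xy : (x == y) = false by rewrite eq_sym (negbTE yx).
rewrite /outer count_rcons_mem xy addn0.
rewrite index_rcons_in //.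
have Hcov : cov (rcons w x) (index y w) = cov w (index y w) || (index x w < index y w).
  apply/covP/orP => [[i [j [h1 h2 h3 h4]]]|].
    rewrite size_rcons in h3.
    case: (ltngtP j (size w)) => hj; [|lia|].
      left; apply/covP; exists i, j; split => //; by rewrite -!(@nth_rcons_lt w x) //; lia.
    move: h4; rewrite hj nth_rcons_n nth_rcons_lt; last lia.
    move=> h; right; have := uniq_pos hc (ltac:(lia) : i < size w) h; lia.
  case=> [/covP [i [j [h1 h2 h3 h4]]]|h].
    exists i, j; split => //; first by rewrite size_rcons; lia.
    by rewrite !nth_rcons_lt //; lia.
  exists (index x w), (size w); split => //; first by rewrite size_rcons.
  by rewrite nth_rcons_n nth_rcons_lt ?nth_index // index_mem.
rewrite Hcov negb_or.
case: (count_mem y w == 1) => //=.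
case: (cov w _) => //=.
have : index y w != index x w.
  apply: contra yx => /eqP e; by rewrite -(nth_index c yw) e nth_index.
rewrite -leqNgt; lia.
Qed.
End Comb.

Local Open Scope group_scope.

Section Perm.
Variable T : finType.
Implicit Types (s Q : {perm T}) (x y z : T) (L : seq T).

Lemma perm_on_prod (A : {set T}) d L : d \in A -> all (mem A) L ->
  perm_on A (\prod_(y <- L) tperm y d).
Proof.
move=> dA; elim: L => [|y L IH] /=; first by rewrite big_nil perm_on1.
case/andP => yA /IH h; rewrite big_cons; apply: perm_onM => //.
apply: subset_trans (tperm_on y d) _.
by apply/subsetP => z; rewrite !inE => /orP [] /eqP ->.
Qed.

Definition tsig c L := \prod_(y <- L) tperm y c.

Lemma sig_on c L : perm_on [set z | z \in c :: L] (tsig c L).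
Proof.
apply: perm_on_prod; first by rewrite inE mem_head.
by apply/allP => z zL; rewrite !inE zL orbT.
Qed.

Lemma sig_fix c L y : y \notin c :: L -> tsig c L y = y.
Proof. by move=> h; apply: out_perm (sig_on c L) _; rewrite inE. Qed.

Lemma porbit_closed s c z : z \in porbit s c -> s z \in porbit s c.
Proof.
case/porbitP => i ->; apply/porbitP; exists i.+1.
by rewrite expgSr permM.
Qed.

Lemma orbit_sub s (O : pred T) c : c \in O -> (forall z, z \in O -> s z \in O) ->
  forall y, y \in porbit s c -> y \in O.
Proof.
move=> cO hO y /porbitP [i ->]; elim: i => [|i IH]; first by rewrite expg0 perm1.
by rewrite expgSr permM; apply: hO.
Qed.

Lemma cycle_lem c S : uniq S -> c \notin S -> forall y, y \in c :: S -> y \in porbit (tsig c S) c.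
Proof.
elim: S => [|x S IH] /=.
  by move=> _ _ y; rewrite inE => /eqP ->; apply: porbit_id.
case/andP => xS uS; rewrite inE negb_or => /andP [cx cS].
rewrite /tsig big_cons -/(tsig c S).
set D := tperm x c * tsig c S.
have Dc : D c = x by rewrite permM tpermR sig_fix // inE negb_or xS eq_sym cx.
have xO : x \in porbit D c by rewrite -Dc porbit_closed // porbit_id.
have sub : forall y, y \in porbit (tsig c S) c -> y \in porbit D c.
  apply: orbit_sub; first exact: porbit_id.
  move=> z zO.
  case: (eqVneq z c) => [->|zc].
    have -> : tsig c S c = D x by rewrite permM tpermL.
    exact: porbit_closed.
  case: (eqVneq z x) => [->|zx].
    by rewrite sig_fix // inE negb_or xS eq_sym cx.
  have -> : tsig c S z = D z by rewrite permM tpermD // eq_sym.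
  exact: porbit_closed.
move=> y; rewrite !inE => /or3P [/eqP ->|/eqP ->|yS].
- exact: porbit_id.
- exact: xO.
- by apply: sub; apply: IH => //; rewrite inE yS orbT.
Qed.

Lemma orb_lem c S Q : uniq S -> c \notin S -> (forall y, y \in c :: S -> Q y = y) ->
  forall y, (y \in porbit (Q * tsig c S) c) = (y \in c :: S).
Proof.
move=> uS cS HQ.
have sub1 : forall y, y \in porbit (Q * tsig c S) c -> y \in c :: S.
  apply: orbit_sub; first exact: mem_head.
  move=> z zO; rewrite permM HQ //.
  have := perm_closed z (sig_on c S); rewrite !inE /= => ->.
  by move: zO; rewrite inE.
move=> y; apply/idP/idP; first exact: sub1.
move=> /(cycle_lem uS cS); apply: orbit_sub; first exact: porbit_id.
move=> z zO; have := porbit_closed zO; rewrite permM HQ //; exact: sub1.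
Qed.

Lemma conj_lem c x post : c \notin post -> x \notin post -> x != c ->
  (tsig c post) ^ (tperm x c) = \prod_(y <- post) tperm y x.
Proof.
elim: post => [|y post IH] /=.
  by rewrite /tsig !big_nil conj1g.
rewrite !inE !negb_or => /andP [cy cp] /andP [xy xp] xc.
rewrite /tsig !big_cons conjMg -/(tsig c post) IH // tpermJ tpermR tpermD //.
Qed.
End Perm.

Local Open Scope group_scope.

Section Inv.
Variable T : finType.
Variable c : T.
Implicit Types (s Q : {perm T}) (x y z : T) (w L : seq T).

Lemma sig_rcons L x : tsig c (rcons L x) = tsig c L * tperm x c.
Proof. by rewrite /tsig -cats1 big_cat big_seq1. Qed.

Lemma Sx_sub w y : y \in Sx c w -> y \in w.
Proof. by rewrite mem_filter => /andP []. Qed.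

Lemma inv w : c \notin w -> NC c w -> exists Q, [/\ tsig c w = Q * tsig c (Sx c w),
  uniq (Sx c w) & forall y, (y \notin w) || (y \in Sx c w) -> Q y = y].
Proof.
elim/last_ind: w => [|w x IH].
  move=> _ _; exists 1; split => //; first by rewrite mul1g.
  by move=> y _; rewrite perm1.
rewrite mem_rcons inE negb_or => /andP [cx cw] /C1 [NCw Ho].
have [Q [E U F]] := IH cw NCw.
case xw: (x \in w).
  have Ox := Ho xw.
  have xS : x \in Sx c w by rewrite mem_filter Ox xw.
  rewrite (C3 xw Ox).
  move: U F E; set S := Sx c w => U F E.
  set i := index x S.
  have hi : i < size S by rewrite index_mem.
  have HS : S = take i S ++ x :: drop i.+1 S.
    by rewrite -[X in _ ++ X :: _](nth_index c xS) -drop_nth // cat_take_drop.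
  move: HS; set pre := take i S; set post := drop i.+1 S => HS.
  rewrite HS in U F E.
  have cpost : c \notin post.
    apply: contra cw => cp; apply: (@Sx_sub w c); rewrite -/S HS mem_cat inE cp.
    by rewrite !orbT.
  move: (U); rewrite cat_uniq cons_uniq => /and3P [Upre hpre /andP [xpost Upost]].
  set X := \prod_(y <- post) tperm y x.
  have XD : perm_on [set z | z \in x :: post] X.
    apply: perm_on_prod; first by rewrite inE mem_head.
    by apply/allP => z zp; rewrite !inE zp orbT.
  have key : tsig c (pre ++ x :: post) * tperm x c = tsig c pre * X.
    rewrite /tsig big_cat big_cons /= -/(tsig c pre) -/(tsig c post).
    rewrite -!mulgA; congr (_ * _).
    rewrite /X -(conj_lem cpost xpost (negbT _)); last by apply/negP => /eqP e; rewrite e eqxx in cx.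
    by rewrite /conjg tpermV mulgA.
  have comm : commute (tsig c pre) X.
    apply: perm_onC (sig_on c pre) XD _.
    rewrite -setI_eq0; apply/eqP/setP => z; rewrite !inE.
    apply/negP => /andP [/orP [/eqP ->|zp] zx].
      by case/orP: zx => h; [move: cx; rewrite h | move: cpost; rewrite h].
    by move: hpre; rewrite has_sym /= => /hasP; apply; exists z.
  exists (Q * X); split.
  - rewrite sig_rcons E -mulgA key comm mulgA //.
  - exact: Upre.
  - move=> y hy; rewrite permM.
    have Qy : Q y = y.
      apply: F; move: hy; rewrite mem_rcons inE negb_or => /orP [/andP [_ ->] //|yp].
      by rewrite mem_cat yp orbT.
    rewrite Qy; apply: (out_perm XD); rewrite inE.
    move: hy; rewrite mem_rcons inE negb_or => /orP [/andP [yx yw]|yp].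
      apply: contra yw => h; apply: (@Sx_sub w y); rewrite -/S HS mem_cat h orbT //.
    by apply/negP => h; move: hpre => /hasP; apply; exists y.
exists Q; split.
- by rewrite sig_rcons E C2 ?xw // sig_rcons mulgA.
- rewrite C2 ?xw // rcons_uniq U andbT.
  by apply: contra (negbT xw); apply: Sx_sub.
- move=> y; rewrite C2 ?xw // mem_rcons inE negb_or mem_rcons inE.
  case: (eqVneq y x) => [->|yx] /=; first by move=> _; apply: F; rewrite xw.
  by move=> h; apply: F.
Qed.
End Inv.

Local Open Scope group_scope.

Section Count.
Variable T : finType.
Variable c : T.
Implicit Types (s Q : {perm T}) (x y z : T) (w L : seq T).

Lemma size_undup_rcons w x : size (undup (rcons w x)) = (size (undup w) + (x \notin w))%N.
Proof.
case xw: (x \in w) => /=.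
  rewrite addn0; apply: perm_size; apply: uniq_perm; rewrite ?undup_uniq //.
  by move=> y; rewrite !mem_undup mem_rcons inE; case: eqP => // ->.
rewrite addn1 -(size_rcons (undup w) x); apply: perm_size; apply: uniq_perm.
- exact: undup_uniq.
- by rewrite rcons_uniq undup_uniq mem_undup xw.
- by move=> y; rewrite mem_undup !mem_rcons !inE mem_undup.
Qed.

Lemma NC_nil : NC c [::].
Proof. by split => // i j k l; lia. Qed.

Lemma count_main w : c \notin w ->
  (#|porbits (tsig c w)| + 2 * size (undup w) <= #|T| + size w)%N /\
  (NC c w <-> #|porbits (tsig c w)| + 2 * size (undup w) = #|T| + size w)%N.
Proof.
elim/last_ind: w => [|w x IH].
  move=> _; rewrite /tsig big_nil porbits1 /=; split => //; split => // _; exact: NC_nil.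
rewrite mem_rcons inE negb_or => /andP [cx cw].
have [IH1 IH2] := IH cw.
have Hf := porbits_mulr (tsig c w) x c.
rewrite sig_rcons size_undup_rcons size_rcons.
have xc : (x != c) = true by rewrite eq_sym.
rewrite xc in Hf.
move: IH1 IH2 Hf.
set P := #|porbits (tsig c w)|; set P' := #|porbits (tsig c w * tperm x c)|.
set u := size (undup w); set nT := #|T| => IH1 IH2 Hf.
case xw: (x \in w) => /=.
  have orb : NC c w -> (x \in porbit (tsig c w) c) = outer c w x.
    move=> NCw; have [Q [E U F]] := inv cw NCw.
    rewrite E orb_lem //.
    - have xc2 : (x == c) = false by rewrite eq_sym (negbTE cx).
      by rewrite inE xc2 /= mem_filter xw andbT.
    - by apply: contra cw; apply: Sx_sub.
    - move=> y; rewrite inE => /orP [/eqP ->|yS]; apply: F; first by rewrite cw.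
      by rewrite yS orbT.
  rewrite C1 xw.
  case b: (x \notin porbit (tsig c w) c) Hf => /= Hf.
    split; first lia.
    split; last lia.
    case=> NCw /(_ isT) Ox; exfalso; move: b; by rewrite orb // Ox.
  split; first lia.
  rewrite IH2; split; first by case; lia.
  move=> h; have NCw : NC c w by apply/IH2; lia.
  split; first lia.
  move=> _; rewrite -orb //; by move/negbFE: b.
have b : x \notin porbit (tsig c w) c.
  rewrite porbit_sym; apply/negP => h.
  have : c \in pred1 x.
    apply: (orbit_sub (s := tsig c w) _ _ h); first by rewrite inE.
    move=> z; rewrite inE => /eqP ->; rewrite sig_fix ?inE ?eqxx //; by rewrite xw orbF eq_sym.
  by rewrite inE (negbTE cx).
rewrite b /= in Hf.
rewrite C1 xw; split; first lia.
rewrite IH2; split; first by case => h _; lia.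
by move=> h; split => //; lia.
Qed.
End Count.

Local Close Scope group_scope.


Theorem lemma5 (N : nat) (HN : 2 <= N) (m : nat) (a : 'I_m -> {perm 'I_N})
  (Ha : forall j : 'I_m, exists alpha : 'I_N,
          (alpha < N.-1)%N /\
          exists HNlt : (N.-1 < N)%N, a j = tperm alpha (Ordinal HNlt)) :
  (2 * #|kernel_partition a| >= perm_len (\prod_(j < m) a j)%g + m)%N
  <-> NC12 (kernel_partition a).
Proof.
have HNlt0 : (N.-1 < N)%N by lia.
set c := Ordinal HNlt0.
have Hj : forall j, a j = tperm (a j c) c /\ a j c != c.
  move=> j; have [al [hal [H Hj]]] := Ha j.
  have Ec : Ordinal H = c by apply: val_inj.
  rewrite Hj Ec tpermR; split => //.
  by apply/eqP => e; move: hal; rewrite e /= ltnn.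
have aeq : forall j k, (a j == a k) = (a j c == a k c).
  move=> j k; apply/eqP/eqP => [->//|e].
  by rewrite (Hj j).1 (Hj k).1 e.
set w := [seq a j c | j <- enum 'I_m].
have sw : size w = m by rewrite size_map size_enum_ord.
have cw : c \notin w.
  by apply/mapP => [[j _ e]]; move: (Hj j).2; rewrite -e eqxx.
have nthw : forall i (hi : (i < m)%N), nth c w i = a (Ordinal hi) c.
  move=> i hi; rewrite (nth_map (Ordinal hi)) ?size_enum_ord //.
  congr (a _ c); apply: val_inj; by rewrite /= nth_enum_ord.
have prodE : (\prod_(j < m) a j)%g = tsig c w.
  rewrite /tsig big_map [in RHS]enumT.
  have -> : Finite.enum 'I_m = index_enum 'I_m by rewrite [index_enum _]unlock.
  by apply: eq_bigr => j _; rewrite -(Hj j).1.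
have blk : forall j, #|[set k | a k == a j]| = count_mem (a j c) w.
  move=> j; rewrite count_map -size_filter.
  rewrite -(card_uniqP _); last exact: filter_uniq (enum_uniq _).
  apply: eq_card => k; rewrite inE mem_filter mem_enum andbT /= aeq eq_sym.
  by [].
have inw : forall y, y \in w -> exists j, y = a j c.
  by move=> y /mapP [j _ ->]; exists j.
have inw2 : forall j, a j c \in w by move=> j; apply: map_f; rewrite mem_enum.
have KP : kernel_partition a = [set [set k | a k c == y] | y in [set y | y \in w]].
  apply/setP => B; apply/imsetP/imsetP.
    case=> j _ ->; exists (a j c); first by rewrite inE.
    by apply/setP => k; rewrite !inE aeq.
  case=> y; rewrite inE => /inw [j ->] ->; exists j => //.
  by apply/setP => k; rewrite !inE aeq.
have card : #|kernel_partition a| = size (undup w).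
  rewrite KP card_in_imset.
    rewrite cardsE -(card_uniqP _); last exact: undup_uniq.
    by apply: eq_card => y; rewrite mem_undup.
  move=> y1 y2; rewrite !inE => /inw [j ->] _ e.
  have : j \in [set k | a k c == a j c] by rewrite inE.
  by rewrite e inE => /eqP.
have part : partition (kernel_partition a) [set: 'I_m].
  have -> : kernel_partition a = preim_partition a [set: 'I_m].
    apply/setP => B; apply/imsetP/imsetP => [[j _ ->]|[j _ ->]]; exists j => //;
      by apply/setP => k; rewrite !inE // eq_sym.
  exact: preim_partitionP.
have nthw' : forall k : 'I_m, nth c w k = a k c.
  by move=> k; rewrite (nthw k (ltn_ord k)); congr (a _ c); apply: val_inj.
have Bin : forall j, [set k | a k == a j] \in kernel_partition a.
  by move=> j; apply/imsetP; exists j.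
have NCiff : NC c w <-> NC12 (kernel_partition a).
  split.
    case=> Hc Hn; split; first exact: part.
    split.
      move=> B /imsetP [j _ ->]; rewrite blk.
      have := Hc (a j c).
      have : (0 < count_mem (a j c) w)%N by rewrite -has_count has_pred1 inw2.
      set q := count_mem _ w; move: q => q; lia.
    move=> B B' /imsetP [j0 _ ->] /imsetP [j1 _ ->] neq k1 l1 k2 l2 h1 h2 h3 [].
    rewrite !inE !aeq => /eqP e1 /eqP e2 /eqP e3 /eqP e4.
    have := Hn k1 l1 k2 l2 h1 h2 h3; rewrite sw !nthw' => /(_ (ltn_ord l2)).
    rewrite e1 e2 e3 e4 => /(_ erefl erefl) e5.
    move/negP: neq; apply; apply/eqP/setP => k; rewrite !inE !aeq e5.
    by [].
  case=> _ [Hs Hnc]; split.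
    move=> y; case yw: (y \in w).
      have [j ->] := inw y yw.
      have := Hs _ (Bin j); rewrite blk; set q := count_mem _ w; move: q => q; lia.
    by move/negbT: yw; rewrite -has_pred1 has_count -leqNgt leqn0 => /eqP ->.
  move=> i j k l h1 h2 h3 h4; rewrite sw in h4.
  have hi : (i < m)%N by lia.
  have hj : (j < m)%N by lia.
  have hk : (k < m)%N by lia.
  rewrite (nthw i hi) (nthw j hj) (nthw k hk) (nthw l h4) => e1 e2.
  apply/eqP; apply: contraT => ne; exfalso.
  apply: (Hnc _ _ (Bin (Ordinal hi)) (Bin (Ordinal hj)) _
            (Ordinal hi) (Ordinal hj) (Ordinal hk) (Ordinal h4) h1 h2 h3).
    apply/negP => /eqP /setP /(_ (Ordinal hi)); rewrite !inE !aeq eqxx.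
    by move=> e; move: ne; rewrite -e.
  by rewrite !inE !aeq e1 e2 !eqxx.
rewrite prodE card perm_lenE.
have [H1 H2] := count_main cw; rewrite sw in H1 H2.
have Hle := porbits_le (tsig c w).
move: H1 H2 Hle; set P := #|porbits (tsig c w)|; set u := size (undup w).
set nT := #|'I_N| => H1 H2 Hle.
split.
  by move=> h; apply/NCiff/H2; lia.
by move/NCiff/H2 => h; lia.
Qed.
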